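(* In the setting described in the context, let $p$ be a facet of $\Delta_\lambda$ of $\mathbf a$-degree at least $1$, with nodes $v_1,\dots,v_{k-1}$ labelled $1,\dots,k-1$, so that $p$ is identified with the simplex on $[k-1]=\{1,\dots,k-1\}$. Then every facet of $F_{<p}\cap p$ is of the form $[k-1]\setminus L$ where $L=\{i,i+1,\dots,i+j\}$ is a set of consecutive indices.
   Context: Let $n,d\ge2$, $V(n,d)=\{\mathbf b\in\mathbb N^n:\sum_i b_i=d\}$, and let $\mathbf a\in V(n,d)$ satisfy $a_1\le\dots\le a_n$ and $\mathbf a\notin\{(0,\dots,0,d),(0,\dots,0,1,d-1),(0,\dots,0,2,d-2)\}$. Let $\Gamma=V(n,d)\setminus\{\mathbf a\}$ and assume $\Gamma+\Gamma=V(n,2d)$. Order $V(n,d)$ lexicographically ($b<c$ iff the first nonzero coordinate of $c-b$ is positive). Let $\lambda$ be in the semigroup generated by $\Gamma$, $k=|\lambda|=(\sum_i\lambda_i)/d$. A closed chain from $0$ to $\lambda$ is a sequence $0=v_0,v_1,\dots,v_k=\lambda$ in $\mathbb N^n$ with all links $v_j-v_{j-1}\in V(n,d)$; its $\mathbf a$-degree is the number of links equal to $\mathbf a$; its open chain is $\{v_1,\dots,v_{k-1}\}$, with $v_j$ the node labelled $j$. $\Delta_\lambda$ is the simplicial complex whose facets are all these open chains. Facets are ordered: $q<p$ iff $\mathbf a$-degree of $q$ is smaller than that of $p$, or equal and the link sequence of $q$ is lexicographically smaller than that of $p$ (first links compared first, using the order on $V(n,d)$). $F_{<p}$ is the subcomplex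 of $\Delta_\lambda$ generated by the facets $q<p$; $p$ also denotes the full simplex on its nodes. *)

(* Defs.v *)
From mathcomp Require Import all_boot.
Set Implicit Arguments. Unset Strict Implicit. Unset Printing Implicit Defensive.

Definition vec (n : nat) := {ffun 'I_n -> nat}.
Definition vsum n (b : vec n) : nat := \sum_(i < n) b i.
Definition vzero n : vec n := [ffun=> 0].
Definition vadd n (b c : vec n) : vec n := [ffun i => b i + c i].
Definition vsumseq n (s : seq (vec n)) : vec n := foldr (@vadd n) (vzero n) s.

Definition inV n (d : nat) (b : vec n) : bool := vsum b == d.

Definition ltlex n (b c : vec n) : Prop :=
  exists i : 'I_n, (forall j : 'I_n, j < i -> b j = c j) /\ b i < c i.

Definition exc1 n d : vec n := [ffun i : 'I_n => if val i == n.-1 then d else 0].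
Definition exc2 n d : vec n :=
  [ffun i : 'I_n => if val i == n.-1 then d - 1 else if val i == n.-2 then 1 else 0].
Definition exc3 n d : vec n :=
  [ffun i : 'I_n => if val i == n.-1 then d - 2 else if val i == n.-2 then 2 else 0].

(* A closed chain from 0 to lam, given by its sequence of links
   v_1 - v_0, ..., v_k - v_{k-1}. *)
Definition closed_chain n d (lam : vec n) (ls : seq (vec n)) : Prop :=
  all (inV d) ls /\ vsumseq ls = lam.

Definition adeg n (a : vec n) (ls : seq (vec n)) : nat := count (pred1 a) ls.

Definition node n (ls : seq (vec n)) (j : nat) : vec n := vsumseq (take j ls).

(* the open chain {v_1, ..., v_{k-1}} (as a set of points), k = size ls *)
Definition open_chain n (ls : seq (vec n)) (x : vec n) : Prop :=
  exists j, 1 <= j <= (size ls).-1 /\ x = node ls j.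

(* order on facets (identified with their link sequences) *)
Definition facet_lt n (a : vec n) (q p : seq (vec n)) : Prop :=
  adeg a q < adeg a p \/
  (adeg a q = adeg a p /\
   exists m, m < size q /\ m < size p /\
     (forall t, t < m -> nth (vzero n) q t = nth (vzero n) p t) /\
     ltlex (nth (vzero n) q m) (nth (vzero n) p m)).

(* faces of F_{<p} \cap p : subsets of the nodes of p contained in
   the open chain of some closed chain q < p *)
Definition face_Flt_cap n d (a lam : vec n) (p : seq (vec n)) (S : vec n -> Prop) : Prop :=
  (forall x, S x -> open_chain p x) /\
  exists q, closed_chain d lam q /\ facet_lt a q p /\ (forall x, S x -> open_chain q x).

Definition facet_Flt_cap n d (a lam : vec n) (p : seq (vec n)) (S : vec n -> Prop) : Prop :=
  face_Flt_cap d a lam p S /\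
  forall T, face_Flt_cap d a lam p T -> (forall x, S x -> T x) -> forall x, T x -> S x.

(* Main.v *)
Require Import Defs.
From mathcomp Require Import all_boot.
From mathcomp Require Import zify.
Set Implicit Arguments. Unset Strict Implicit. Unset Printing Implicit Defensive.

Lemma vsumseq_cons n (x : vec n) s : vsumseq (x :: s) = vadd x (vsumseq s).
Proof. by []. Qed.
Lemma vsumseq_nil n : vsumseq [::] = vzero n. Proof. by []. Qed.

Lemma vadd0l n (b : vec n) : vadd (vzero n) b = b.
Proof. by apply/ffunP=> i; rewrite !ffunE. Qed.
Lemma vadd0r n (b : vec n) : vadd b (vzero n) = b.
Proof. by apply/ffunP=> i; rewrite !ffunE addn0. Qed.
Lemma vaddA n (b c e : vec n) : vadd b (vadd c e) = vadd (vadd b c) e.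
Proof. by apply/ffunP=> i; rewrite !ffunE addnA. Qed.
Lemma vadd_cancel n (u x y : vec n) : vadd u x = vadd u y -> x = y.
Proof. move/ffunP=> H; apply/ffunP=> i; move: (H i); rewrite !ffunE; exact: addnI. Qed.

Lemma vsumseq_cat n (s1 s2 : seq (vec n)) :
  vsumseq (s1 ++ s2) = vadd (vsumseq s1) (vsumseq s2).
Proof.
elim: s1 => [|x s IH]; first by rewrite cat0s; apply/ffunP=> i; rewrite !ffunE.
by rewrite cat_cons !vsumseq_cons IH vaddA.
Qed.

Lemma vsum_vadd n (b c : vec n) : vsum (vadd b c) = vsum b + vsum c.
Proof. by rewrite /vsum -big_split; apply: eq_bigr => i _; rewrite ffunE. Qed.

Lemma vsum_vsumseq n d (s : seq (vec n)) : all (inV d) s -> vsum (vsumseq s) = size s * d.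
Proof.
elim: s => [|x s IH].
  by move=> _; rewrite /vsum big1 // => i _; rewrite ffunE.
by move=> /= /andP [/eqP Hx Hs]; rewrite vsum_vadd Hx IH // mulSn.
Qed.

Lemma all_take' (T : eqType) (P : pred T) l s : all P s -> all P (take l s).
Proof. move/allP=> H; apply/allP=> x /mem_take; exact: H. Qed.
Lemma all_drop' (T : eqType) (P : pred T) l s : all P s -> all P (drop l s).
Proof. move/allP=> H; apply/allP=> x /mem_drop; exact: H. Qed.

Lemma vsum_node n d (s : seq (vec n)) l : all (inV d) s -> l <= size s -> vsum (node s l) = l * d.
Proof. by move=> Hs Hl; rewrite /node (vsum_vsumseq (all_take' l Hs)) size_takel. Qed.

Lemma node_label n d (p q : seq (vec n)) l l' : 0 < d -> all (inV d) p -> all (inV d) q ->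
  l <= size p -> l' <= size q -> node p l = node q l' -> l = l'.
Proof.
move=> d0 Hp Hq Hl Hl' E. have := vsum_node Hp Hl. rewrite E (vsum_node Hq Hl') => H.
by apply/eqP; rewrite -(eqn_pmul2r d0) H.
Qed.

Lemma nodeS n (s : seq (vec n)) l : l < size s -> node s l.+1 = vadd (node s l) (nth (vzero n) s l).
Proof. by move=> Hl; rewrite /node (take_nth (vzero n) Hl) -cats1 vsumseq_cat vsumseq_cons vsumseq_nil vadd0r. Qed.

Definition seg n (s : seq (vec n)) l1 l2 := take (l2 - l1) (drop l1 s).
Definition splice n (p q : seq (vec n)) l1 l2 := take l1 p ++ seg q l1 l2 ++ drop l2 p.

Lemma seg_split n (s : seq (vec n)) l1 l l2 : l1 <= l -> l <= l2 -> seg s l1 l2 = seg s l1 l ++ seg s l l2.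
Proof.
move=> H1 H2; rewrite /seg.
have -> : l2 - l1 = (l - l1) + (l2 - l) by lia.
rewrite takeD drop_drop.
have -> : l - l1 + l1 = l by lia.
done.
Qed.

Lemma take_seg n (s : seq (vec n)) l1 l2 : l1 <= l2 -> take l1 s ++ seg s l1 l2 = take l2 s.
Proof. by move=> H; rewrite /seg -takeD subnKC. Qed.

Lemma split3 n (s : seq (vec n)) l1 l2 : l1 <= l2 -> take l1 s ++ seg s l1 l2 ++ drop l2 s = s.
Proof. by move=> H; rewrite catA take_seg // cat_take_drop. Qed.

Lemma size_seg n (s : seq (vec n)) l1 l2 : l1 <= l2 -> l2 <= size s -> size (seg s l1 l2) = l2 - l1.
Proof. move=> H1 H2; rewrite /seg size_takel // size_drop; lia. Qed.

Lemma size_splice n (p q : seq (vec n)) l1 l2 : size p = size q -> l1 <= l2 -> l2 <= size p ->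
  size (splice p q l1 l2) = size p.
Proof.
move=> Hs H1 H2; rewrite /splice !size_cat size_takel; last lia.
rewrite size_seg; try lia. rewrite size_drop; lia.
Qed.

Lemma seg_one n (s : seq (vec n)) l : l < size s -> seg s l l.+1 = [:: nth (vzero n) s l].
Proof. by move=> Hl; rewrite /seg subSnn (drop_nth (vzero n) Hl) /= take0. Qed.

Lemma node_pre n (p q : seq (vec n)) l1 l : node p l1 = node q l1 -> l1 <= l ->
  vsumseq (take l1 p ++ seg q l1 l) = node q l.
Proof.
move=> E H; rewrite vsumseq_cat.
change (vsumseq (take l1 p)) with (node p l1).
by rewrite E /node -vsumseq_cat take_seg.
Qed.

Lemma node_splice_in n (p q : seq (vec n)) l1 l2 l : size p = size q -> l2 <= size p ->
  node p l1 = node q l1 -> l1 <= l -> l <= l2 -> node (splice p q l1 l2) l = node q l.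
Proof.
move=> Hs H2 E H1 Hl.
rewrite /node /splice (seg_split q H1 Hl).
have -> : take l1 p ++ (seg q l1 l ++ seg q l l2) ++ drop l2 p =
   (take l1 p ++ seg q l1 l) ++ (seg q l l2 ++ drop l2 p) by rewrite !catA.
rewrite take_size_cat; first exact: node_pre.
rewrite size_cat size_takel; last lia. rewrite size_seg; lia.
Qed.

Lemma node_splice_post n (p q : seq (vec n)) l1 l2 l : size p = size q -> l1 <= l2 ->
  node p l1 = node q l1 -> node p l2 = node q l2 -> l2 <= l -> l <= size p ->
  node (splice p q l1 l2) l = node p l.
Proof.
move=> Hs H12 E1 E2 H1 Hl.
have Hsz : size (take l1 p ++ seg q l1 l2) = l2.
  rewrite size_cat size_takel; last lia. rewrite size_seg; lia.
rewrite /node /splice catA.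
have -> : l = l2 + (l - l2) by lia.
rewrite takeD take_size_cat // drop_size_cat // vsumseq_cat node_pre // -E2.
by rewrite /node -vsumseq_cat -takeD.
Qed.

Lemma node_splice_before n (p q : seq (vec n)) l1 l2 l : l <= l1 -> l1 <= size p ->
  node (splice p q l1 l2) l = node p l.
Proof.
move=> H1 H2; rewrite /node /splice takel_cat ?take_takel //.
by rewrite size_takel.
Qed.

Lemma nth_splice_before n (p q : seq (vec n)) l1 l2 t : t < l1 -> l1 <= size p ->
  nth (vzero n) (splice p q l1 l2) t = nth (vzero n) p t.
Proof.
move=> H1 H2; rewrite /splice nth_cat size_takel // H1 nth_take //.
Qed.

Lemma nth_splice_at n (p q : seq (vec n)) l1 l2 : l1 < l2 -> l2 <= size q -> l1 <= size p ->
  nth (vzero n) (splice p q l1 l2) l1 = nth (vzero n) q l1.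
Proof.
move=> H1 H2 H3; rewrite /splice nth_cat size_takel // ltnn subnn nth_cat size_seg //; last lia.
rewrite subn_gt0 H1 /seg nth_take ?subn_gt0 // nth_drop addn0 //.
Qed.

Lemma count_splice n (a : vec n) (p q : seq (vec n)) l1 l2 : l1 <= l2 ->
  count (pred1 a) (splice p q l1 l2) + count (pred1 a) (seg p l1 l2) = count (pred1 a) p + count (pred1 a) (seg q l1 l2).
Proof.
move=> H. have E := split3 p H. rewrite /splice !count_cat.
rewrite -[in count _ p]E !count_cat.
move: (count_mem a (take l1 p)) (count_mem a (seg q l1 l2)) (count_mem a (seg p l1 l2)) (count_mem a (drop l2 p)) => A B C D. lia.
Qed.

Lemma link_eq n (p q : seq (vec n)) l : l < size p -> l < size q ->
  node p l = node q l -> node p l.+1 = node q l.+1 -> nth (vzero n) p l = nth (vzero n) q l.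
Proof. by move=> H1 H2 E E'; rewrite !nodeS // E in E'; apply: vadd_cancel E'. Qed.

Lemma blockA n d (a : vec n) (p q : seq (vec n)) :
  all (inV d) p -> all (inV d) q -> size p = size q -> node p (size p) = node q (size p) ->
  forall N l0, size p - l0 <= N -> l0 <= size p -> node p l0 = node q l0 ->
  count (pred1 a) (seg q l0 (size p)) < count (pred1 a) (seg p l0 (size p)) ->
  exists l1 l2, [/\ l0 <= l1, l1.+2 <= l2, l2 <= size p, node p l1 = node q l1 & node p l2 = node q l2] /\
     (forall l, l1 < l -> l < l2 -> node p l <> node q l) /\
     count (pred1 a) (seg q l1 l2) < count (pred1 a) (seg p l1 l2).
Proof.
move=> Hp Hq Hsz Hend; elim=> [|N IH] l0 HN Hl0 E0 Hc.
  have Hlt : l0 < size p.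
    rewrite ltn_neqAle Hl0 andbT; apply/eqP => E; move: Hc; by rewrite E /seg subnn !take0.
  lia.
have Hlt : l0 < size p.
  rewrite ltn_neqAle Hl0 andbT; apply/eqP => E; move: Hc; by rewrite E /seg subnn !take0.
have Hex : exists l, (l0 < l) && (l <= size p) && (node p l == node q l).
  by exists (size p); rewrite Hlt leqnn Hend eqxx.
case: (ex_minnP Hex) => l2 /andP[/andP[H02 H2k] /eqP E2] Hmin.
have Hnone : forall l, l0 < l -> l < l2 -> node p l <> node q l.
  move=> l H1 H2 E; have := Hmin l; rewrite H1 E eqxx andbT.
  have -> : l <= size p by lia.
  move=> /(_ isT); lia.
rewrite (seg_split q (ltnW H02) H2k) (seg_split p (ltnW H02) H2k) !count_cat in Hc.
case: (ltnP (count (pred1 a) (seg q l0 l2)) (count (pred1 a) (seg p l0 l2))) => Hc1.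
  exists l0, l2; split; last by split.
  split => //.
  case: (ltnP l0.+1 l2) => H //.
  have El2 : l2 = l0.+1 by lia.
  subst l2.
  have Hl : nth (vzero n) p l0 = nth (vzero n) q l0 by apply: link_eq => //; lia.
  move: Hc1; rewrite !seg_one ?Hl //; try lia.
have Hc2 : count (pred1 a) (seg q l2 (size p)) < count (pred1 a) (seg p l2 (size p)) by lia.
have HN2 : size p - l2 <= N by lia.
have [l1 [l2' [[H1 H2 H3 E1 E2'] [Hn Hc']]]] := IH l2 HN2 H2k E2 Hc2.
exists l1, l2'; split => //; split => //; lia.
Qed.

Lemma flt_adeg n (a : vec n) p q l1 l2 : l1 <= l2 ->
  count (pred1 a) (seg q l1 l2) < count (pred1 a) (seg p l1 l2) -> facet_lt a (splice p q l1 l2) p.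
Proof. move=> H Hc; left; rewrite /adeg; have := count_splice a p q H; lia. Qed.

Lemma flt_lex n (a : vec n) p q l1 l2 : l1 < l2 -> l2 <= size p -> size p = size q ->
  count (pred1 a) (seg q l1 l2) = count (pred1 a) (seg p l1 l2) ->
  ltlex (nth (vzero n) q l1) (nth (vzero n) p l1) -> facet_lt a (splice p q l1 l2) p.
Proof.
move=> H1 H2 Hs Hc Hlx; right; split.
  rewrite /adeg; have := count_splice a p q (ltnW H1); lia.
exists l1; rewrite size_splice //; last lia.
split; first lia. split; first lia. split.
  move=> t Ht; apply: nth_splice_before => //; lia.
rewrite nth_splice_at //; lia.
Qed.

Lemma ltlex_neq n (b c : vec n) : ltlex b c -> b <> c.
Proof. by case=> i [_ H] E; move: H; rewrite E ltnn. Qed.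

Lemma exists_block n d (a : vec n) p q :
  0 < d -> all (inV d) p -> all (inV d) q -> size p = size q -> node p (size p) = node q (size p) ->
  facet_lt a q p ->
  exists l1 l2, [/\ l1.+2 <= l2, l2 <= size p, node p l1 = node q l1 & node p l2 = node q l2] /\
    (forall l, l1 < l -> l < l2 -> node p l <> node q l) /\ facet_lt a (splice p q l1 l2) p.
Proof.
move=> d0 Hp Hq Hsz Hend [Hadeg|[Hadeg [m [Hmq [Hmp [Hpre Hlx]]]]]].
  have E0 : node p 0 = node q 0 by rewrite /node !take0.
  have Hsp : forall s : seq (vec n), size s = size p -> seg s 0 (size p) = s.
    by move=> s Hs; rewrite /seg subn0 drop0 -Hs take_size.
  have Hc : count (pred1 a) (seg q 0 (size p)) < count (pred1 a) (seg p 0 (size p)).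
    by rewrite !Hsp.
  have [l1 [l2 [[H0 H1 H2 E1 E2] [Hn Hc']]]] := blockA Hp Hq Hsz Hend (leqnn _) (leq0n _) E0 Hc.
  exists l1, l2; split => //; split => //; apply: flt_adeg => //; lia.
have Em : node p m = node q m.
  rewrite /node; congr vsumseq; apply: (@eq_from_nth _ (vzero n)).
    rewrite !size_takel //; lia.
  move=> i; rewrite size_takel; last lia.
  by move=> Hi; rewrite !nth_take // Hpre.
have Hex : exists l, (m < l) && (l <= size p) && (node p l == node q l).
  by exists (size p); rewrite Hmp leqnn Hend eqxx.
case: (ex_minnP Hex) => l2 /andP[/andP[H02 H2k] /eqP E2] Hmin.
have Hnone : forall l, m < l -> l < l2 -> node p l <> node q l.
  move=> l H1 H2 E; have := Hmin l; rewrite H1 E eqxx andbT.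
  have -> : l <= size p by lia.
  move=> /(_ isT); lia.
have Hm2 : m.+2 <= l2.
  case: (ltnP m.+1 l2) => H //.
  have El2 : l2 = m.+1 by lia.
  subst l2.
  have Hl : nth (vzero n) p m = nth (vzero n) q m by apply: link_eq => //; lia.
  by case: (ltlex_neq Hlx).
have Hcnt : forall s : seq (vec n), size s = size p ->
    adeg a s = count (pred1 a) (take m s) + count (pred1 a) (seg s m l2)
               + count (pred1 a) (seg s l2 (size p)).
  move=> s Hs; rewrite /adeg -{1}(take_size s) Hs -(take_seg s (ltnW Hmp)).
  rewrite (seg_split s (ltnW H02) H2k) !count_cat; lia.
have Htk : take m q = take m p.
  apply: (@eq_from_nth _ (vzero n)).
    rewrite !size_takel //; lia.
  move=> i; rewrite size_takel; last lia.
  by move=> Hi; rewrite !nth_take // Hpre.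
have Ha := Hadeg; rewrite (Hcnt q) // (Hcnt p) // Htk in Ha.
case: (ltngtP (count (pred1 a) (seg q m l2)) (count (pred1 a) (seg p m l2))) => Hc.
- exists m, l2; split => //; split => //; apply: flt_adeg => //; lia.
- have Hc2 : count (pred1 a) (seg q l2 (size p)) < count (pred1 a) (seg p l2 (size p)) by lia.
  have [l1 [l2' [[H0 H1 H3 E1 E2'] [Hn Hc']]]] :=
    blockA Hp Hq Hsz Hend (leqnn _) H2k E2 Hc2.
  exists l1, l2'; split => //; split => //; apply: flt_adeg => //; lia.
- exists m, l2; split => //; split => //; apply: flt_lex => //.
Qed.

Theorem lemma3p2 (n d : nat) (a lam : vec n) (p : seq (vec n)) (S : vec n -> Prop) :
  2 <= n -> 2 <= d ->
  inV d a ->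
  (forall i j : 'I_n, i <= j -> a i <= a j) ->
  a <> exc1 n d -> a <> exc2 n d -> a <> exc3 n d ->
  (* Gamma + Gamma = V(n,2d), Gamma = V(n,d) \ {a} *)
  (forall c : vec n, inV (2 * d) c ->
     exists b1 b2 : vec n, [/\ inV d b1, b1 != a, inV d b2, b2 != a & vadd b1 b2 = c]) ->
  (* lam in the semigroup generated by Gamma *)
  (exists gs : seq (vec n), all (fun b => inV d b && (b != a)) gs /\ vsumseq gs = lam) ->
  (* p a facet of Delta_lam of a-degree >= 1 *)
  closed_chain d lam p -> 1 <= adeg a p ->
  facet_Flt_cap d a lam p S ->
  exists i j : nat,
    1 <= i /\ i + j <= (size p).-1 /\
    forall x, S x <-> exists l, [/\ 1 <= l <= (size p).-1, ~~ (i <= l <= i + j) & x = node p l].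
Proof.
move=> Hn Hd Ha Hmono H1 H2 H3 Hgg Hlam [Hp Hpl] Hadeg [[HSp [q [[Hq Hql] [Hlt HSq]]]] Hmax].
have d0 : 0 < d by lia.
have Hsz : size p = size q.
  have E1 := vsum_vsumseq Hp. have E2 := vsum_vsumseq Hq.
  rewrite Hpl in E1; rewrite Hql E1 in E2.
  by apply/eqP; rewrite -(eqn_pmul2r d0) E2.
have Hend : node p (size p) = node q (size p).
  by rewrite /node {2}Hsz !take_size Hpl Hql.
have [l1 [l2 [[H12 H2k E1 E2] [Hnone Hflt]]]] := exists_block d0 Hp Hq Hsz Hend Hlt.
set q' := splice p q l1 l2.
have Hsz' : size q' = size p by rewrite size_splice //; lia.
have Hq' : all (inV d) q'.
  apply/allP => x; rewrite !mem_cat => /orP[/mem_take|/orP[/mem_take/mem_drop|/mem_drop]];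
  by [move/(allP Hp)|move/(allP Hq)|move/(allP Hp)].
have Hnode : forall l, l <= size p -> ~~ (l1 < l < l2) -> node q' l = node p l.
  move=> l Hl Hout; case: (leqP l l1) => H.
    apply: node_splice_before => //; lia.
  apply: node_splice_post => //; lia.
have Hnode_in : forall l, l1 < l -> l < l2 -> node q' l = node q l.
  move=> l Ha1 Ha2; apply: node_splice_in => //; lia.
pose T := fun x => open_chain p x /\ open_chain q' x.
have HT : face_Flt_cap d a lam p T.
  split; first by move=> x [].
  exists q'; split; last by split => // x [].
  split => //.
  rewrite -[q']take_size -/(node q' _) Hsz' Hnode //; last lia.
  by rewrite /node take_size.
have HST : forall x, S x -> T x.
  move=> x Sx; split; first exact: HSp.
  case: (HSp x Sx) => l [Hl Ex]; case: (HSq _ Sx) => l' [Hl' E].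
  have ll : l = l' by apply: (node_label d0 Hp Hq) => //; [lia|lia|rewrite -Ex].
  subst l'.
  exists l; rewrite Hsz'; split => //. rewrite Ex; symmetry; apply Hnode; first lia.
  apply/negP => /andP [Ha1 Ha2]; apply: (Hnone l Ha1 Ha2); by rewrite -Ex.
have HTS := Hmax T HT HST.
exists l1.+1, (l2 - l1 - 2); split; first done. split; first lia.
move=> x; split.
  move=> Sx; have [[l [Hl ->]] [l' [Hl' E]]] := HST x Sx.
  rewrite Hsz' in Hl'.
  have ll : l = l' by apply: (node_label d0 Hp Hq') => //; lia.
  subst l'.
  exists l; split => //.
  apply/negP => /andP [Ha1 Ha2].
  have Hb1 : l1 < l by lia.
  have Hb2 : l < l2 by lia.
  rewrite Hnode_in // in E; exact: (Hnone l Hb1 Hb2 E).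
case => l [Hl Hout ->]; apply HTS; split; exists l; split => //.
  by rewrite Hsz'.
symmetry; apply Hnode; first lia.
apply/negP => /andP [Ha1 Ha2]; move: Hout; rewrite /=.
have -> : l1.+1 <= l by lia.
have -> : l <= l1.+1 + (l2 - l1 - 2) by lia.
done.
Qed.
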